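(* Let $\Sigma$ be a finite alphabet, $\mathcal F\subseteq\Sigma^{\Sigma^*}$ and $T\in\mathbb N_+$, and let $\mathcal L(\mathcal F^{\mathrm{CoT}(T)})$ be the associated CoT loss class. If $\Sigma=\{0,1\}$, then $$\mathrm{VCdim}(\mathcal L(\mathcal F^{\mathrm{CoT}(T)}))\le3\,\mathrm{VCdim}(\mathcal F)\log_2\!\left(\frac{2T}{\ln2}\right).$$ For any non-binary finite $\Sigma$, $$\mathrm{VCdim}(\mathcal L(\mathcal F^{\mathrm{CoT}(T)}))\le3\,\mathrm{Ndim}(\mathcal F)\log_2\!\left(\frac{2\,\mathrm{Ndim}(\mathcal F)\,|\Sigma|^2\,T}{e\ln2}\right).$$
   Context: For $f:\Sigma^*\to\Sigma$, $\bar f(\mathbf x)$ is $\mathbf x$ with $f(\mathbf x)$ appended and $f^{\mathrm{CoT}(T)}=\bar f^{\circ T}$. The loss class $\mathcal L(\mathcal F^{\mathrm{CoT}(T)})=\{\ell_f:f\in\mathcal F\}$ consists of the $\{0,1\}$-valued functions on strings $\mathbf z$ (of length at least $T$) given by $\ell_f(\mathbf z)=\mathbf 1[\mathbf z\ne f^{\mathrm{CoT}(T)}(\mathbf x)]$, where $\mathbf x$ is $\mathbf z$ with its last $T$ tokens removed. $\mathrm{VCdim}$ is VC dimension. Natarajan dimension $\mathrm{Ndim}(\mathcal H)$: the largest size of a set $S$ for which there are $h_0,h_1$ with $h_0(\mathbf x)\ne h_1(\mathbf x)$ on $S$ such that for every $U\subseteq S$ some $h\in\mathcal H$ agrees with $h_0$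 on $U$ and with $h_1$ on $S\setminus U$. *)

(* Defs.v *)
From mathcomp Require Import all_boot.
From Stdlib Require Import Reals.

Set Implicit Arguments.
Unset Strict Implicit.
Unset Printing Implicit Defensive.

Definition cot_step (S : Type) (f : seq S -> S) (x : seq S) : seq S :=
  rcons x (f x).

Definition cot (S : Type) (f : seq S -> S) (T : nat) : seq S -> seq S :=
  iter T (cot_step f).

Definition cot_loss (S : eqType) (f : seq S -> S) (T : nat) (z : seq S) : bool :=
  z != cot f T (take (size z - T) z).

Definition loss_class (S : eqType) (F : (seq S -> S) -> Prop) (T : nat)
  : (seq S -> bool) -> Prop :=
  fun l => exists f, F f /\ l = cot_loss f T.

Definition vc_shatters (X : eqType) (H : (X -> bool) -> Prop) (P : seq X) : Prop :=
  forall lab : X -> bool, exists h, H h /\ forall x, x \in P -> h x = lab x.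

Definition is_VCdim (X : eqType) (H : (X -> bool) -> Prop) (d : nat) : Prop :=
  (exists P, uniq P /\ size P = d /\ vc_shatters H P) /\
  (forall P, uniq P -> vc_shatters H P -> size P <= d).

Definition nat_shatters (X Y : eqType) (H : (X -> Y) -> Prop) (P : seq X) : Prop :=
  exists h0 h1 : X -> Y,
    (forall x, x \in P -> h0 x != h1 x) /\
    forall U : X -> bool, exists h, H h /\
      forall x, x \in P -> h x = (if U x then h0 x else h1 x).

Definition is_Ndim (X Y : eqType) (H : (X -> Y) -> Prop) (d : nat) : Prop :=
  (exists P, uniq P /\ size P = d /\ nat_shatters H P) /\
  (forall P, uniq P -> nat_shatters H P -> size P <= d).

Definition log2 (x : R) : R := (ln x / ln 2)%R.

(* Main.v *)
From Stdlib Require Import Lra Lia.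
Require Import Defs.
From mathcomp Require Import all_boot zify.
From Stdlib Require Import Reals ClassicalEpsilon.

Set Implicit Arguments.
Unset Strict Implicit.
Unset Printing Implicit Defensive.

Fixpoint Phi (c N n : nat) : nat :=
  match N with
  | 0 => 1
  | N'.+1 => Phi c N' n + (if n is n'.+1 then c * Phi c N' n' else 0)
  end.

Definition shat (Y I : finType) (H : {set {ffun I -> Y}}) (S : {set I}) : Prop :=
  exists h0 h1 : I -> Y, (forall i, i \in S -> h0 i != h1 i) /\
    forall U : {set I}, exists2 g, g \in H &
      forall i, i \in S -> g i = (if i \in U then h0 i else h1 i).

Fixpoint pairsum (T Y : finType) (A : Y -> {set T}) (ys : seq Y) : nat :=
  match ys with
  | [::] => 0
  | y :: ys' => \sum_(y' <- ys') #|A y :&: A y'| + pairsum A ys'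
  end.

Lemma card_I_bigcup (T Y : finType) (B : {set T}) (A : Y -> {set T}) (ys : seq Y) :
  #|B :&: \bigcup_(y <- ys) A y| <= \sum_(y <- ys) #|B :&: A y|.
Proof.
elim: ys => [|y ys IH]; first by rewrite !big_nil setI0 cards0.
rewrite !big_cons setIUr.
apply: leq_trans (leq_card_setU _ _) _.
by rewrite leq_add2l.
Qed.

Lemma sum_card_le (T Y : finType) (A : Y -> {set T}) (ys : seq Y) :
  \sum_(y <- ys) #|A y| <= #|\bigcup_(y <- ys) A y| + pairsum A ys.
Proof.
elim: ys => [|y ys IH]; first by rewrite !big_nil.
rewrite !big_cons /=.
have := cardsUI (A y) (\bigcup_(y0 <- ys) A y0).
have := card_I_bigcup (A y) A ys.
lia.
Qed.

Lemma pairsum_le (T Y : finType) (A : Y -> {set T}) (ys : seq Y) M :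
  uniq ys -> (forall y y', y != y' -> #|A y :&: A y'| <= M) ->
  pairsum A ys <= 'C(size ys, 2) * M.
Proof.
move=> + HM; elim: ys => [|y ys IH] //= /andP [yn u].
rewrite binS bin1 mulnDl [X in _ <= X]addnC; apply: leq_add; last exact: IH.
have key : forall s, {subset s <= ys} -> \sum_(y' <- s) #|A y :&: A y'| <= size s * M.
  elim=> [|z s IHs] sub; first by rewrite big_nil.
  rewrite big_cons /= mulSn; apply: leq_add.
    apply: HM; apply/negP => /eqP E; by move: yn; rewrite E (sub z) // inE eqxx.
  by apply: IHs => w ws; apply: sub; rewrite inE ws orbT.
exact: key.
Qed.

Lemma in_bigcup_seq (T Y : finType) (A : Y -> {set T}) (s : seq Y) g :
  g \in \bigcup_(y <- s) A y -> exists y, g \in A y.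
Proof.
elim: s => [|y s IH]; first by rewrite big_nil inE.
rewrite big_cons inE => /orP [gA|/IH //]; by exists y.
Qed.

Lemma core (Y I : finType) (y0 : Y) : forall N (D : {set I}) (H : {set {ffun I -> Y}}) (n : nat),
  #|D| = N -> (forall h, h \in H -> forall i, i \notin D -> h i = y0) ->
  (forall S : {set I}, S \subset D -> shat H S -> #|S| <= n) -> #|H| <= Phi 'C(#|Y|, 2) N n.
Proof.
elim=> [|N IH] D H n cD supp dim.
  have D0 : D = set0 by apply/eqP; rewrite -cards_eq0 cD.
  have : H \subset [set [ffun=> y0]].
    apply/subsetP => h hH; rewrite inE; apply/eqP/ffunP => i.
    by rewrite ffunE supp // D0 inE.
  by move/subset_leq_card; rewrite cards1.
have [x xD] : exists x, x \in D by apply/card_gt0P; rewrite cD.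
set D' := D :\ x.
have cD' : #|D'| = N by move: (cardsD1 x D); rewrite xD cD add1n => [[]].
pose proj (h : {ffun I -> Y}) : {ffun I -> Y} := [ffun i => if i \in D' then h i else y0].
pose Hy y := [set h in H | h x == y].
pose A y := proj @: Hy y.
have cardA y : #|A y| = #|Hy y|.
  apply: card_in_imset => h h'; rewrite !inE => /andP[hH /eqP hx] /andP[h'H /eqP h'x] E.
  apply/ffunP => i; have := congr1 (fun g : {ffun I -> Y} => g i) E; rewrite !ffunE.
  case: ifP => // iD' _.
  case: (eqVneq i x) => [->|ix]; first by rewrite hx h'x.
  rewrite /D' in_setD1 ix /= in iD'.
  by rewrite !supp ?iD'.
have cardH : #|H| = \sum_(y <- enum Y) #|A y|.
  rewrite big_enum /=.
  under eq_bigr do rewrite cardA.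
  rewrite -sum1_card (partition_big (fun h : {ffun I -> Y} => h x) xpredT) //=.
  apply: eq_bigr => y _.
  rewrite sum1dep_card; apply: eq_card => h; by rewrite !inE.
have inA y g : g \in A y -> exists2 h, h \in H & (h x = y /\ g = proj h).
  by case/imsetP => h; rewrite inE => /andP [hH /eqP hx] ->; exists h.
set U := \bigcup_(y <- enum Y) A y.
have cU : #|U| <= Phi 'C(#|Y|, 2) N n.
  apply: IH cD' _ _.
    move=> g /in_bigcup_seq [y /inA [h _ [_ ->]]] i iD.
    by rewrite ffunE (negbTE iD).
  move=> S SD' [h0 [h1 [neq sh]]]; apply: dim.
    exact: subset_trans SD' (subD1set D x).
  exists h0, h1; split => // U0.
  have [g /in_bigcup_seq [y /inA [h hH [_ gE]]] gP] := sh U0.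
  exists h => // i iS; rewrite -gP // gE ffunE.
  by rewrite (subsetP SD' i iS).
have key y y' (S : {set I}) : y != y' -> S \subset D' -> shat (A y :&: A y') S -> shat H (x |: S).
  move=> yy' SD' [h0 [h1 [neq sh]]].
  exists (fun i => if i == x then y else h0 i), (fun i => if i == x then y' else h1 i).
  split.
    move=> i; rewrite in_setU1; case: (eqVneq i x) => //= _; exact: neq.
  move=> U0; have [g] := sh U0; rewrite inE => /andP [gy gy'] gP.
  have [h hH [hx gE]] : exists2 h, h \in H & (h x = (if x \in U0 then y else y') /\ g = proj h).
    by case: (x \in U0); [apply: inA gy | apply: inA gy'].
  exists h => // i; rewrite in_setU1; case: (eqVneq i x) => [->|ix] /= iS.
    by rewrite hx; case: (x \in U0).
  by rewrite -gP // gE ffunE (subsetP SD' i iS).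
have xS (S : {set I}) : S \subset D' -> x \notin S.
  by move=> SD'; apply/negP => /(subsetP SD'); rewrite in_setD1 eqxx.
have cI y y' : y != y' -> #|A y :&: A y'| <= (if n is n'.+1 then Phi 'C(#|Y|, 2) N n' else 0).
  move=> yy'; clear cU; case: n dim => [|n'] dim.
    rewrite leqn0 cards_eq0; apply/negPn/negP => /set0Pn [g gI].
    have : #|x |: set0| <= 0.
      apply: dim; first by rewrite setU0 sub1set.
      apply: (key y y') => //; first exact: sub0set.
      exists (fun _ => y0), (fun _ => y0); split => [i|U0]; first by rewrite inE.
      by exists g => // i; rewrite inE.
    by rewrite setU0 cards1.
  apply: IH cD' _ _.
    move=> g; rewrite inE => /andP [/inA [h _ [_ ->]] _] i iD.
    by rewrite ffunE (negbTE iD).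
  move=> S SD' shS.
  have := dim _ _ (key y y' S yy' SD' shS).
  rewrite cardsU1 xS // add1n ltnS; apply.
  apply/subsetP => i; rewrite in_setU1 => /orP [/eqP -> //|iS].
  by have := subsetP SD' i iS; rewrite in_setD1 => /andP [].
rewrite cardH /=.
have SC := sum_card_le A (enum Y).
refine (leq_trans SC _).
apply: leq_add; first exact: cU.
have PS := @pairsum_le _ _ A (enum Y) _ (enum_uniq _) cI.
refine (leq_trans PS _).
rewrite -cardE; case: (n) => //=; by rewrite muln0.
Qed.
Open Scope R_scope.

Unset Implicit Arguments.

Lemma ln_le' x y : 0 < x -> x <= y -> ln x <= ln y.
Proof. move=> hx [h|->]; [left; exact: ln_increasing | right; reflexivity]. Qed.

Lemma ln2_pos : 0 < ln 2.
Proof. have := ln_lt_2; lra. Qed.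

Lemma ln_le_sub1 y : 0 < y -> ln y <= y - 1.
Proof.
move=> hy; have := exp_ineq1_le (ln y); rewrite exp_ln //; lra.
Qed.

Lemma ln2_lt1 : ln 2 < 1.
Proof.
have h : 2 < exp 1 by have := exp_ineq1 1 ltac:(lra); lra.
rewrite -[X in _ < X](ln_exp 1); apply: ln_increasing => //; lra.
Qed.

Lemma keyG (x B : R) : 0 < x -> 0 < B -> x * ln 2 <= ln (x * B) ->
  x <= 3 * (ln (2 * B / (exp 1 * ln 2)) / ln 2).
Proof.
move=> hx hB h.
have l2 := ln2_pos.
have e0 : 0 < exp 1 := exp_pos 1.
have p1 : 0 < 2 * B by lra.
have p2 : 0 < exp 1 * ln 2 by apply: Rmult_lt_0_compat.
have E1 : ln (2 * B / (exp 1 * ln 2)) = ln 2 + ln B - 1 - ln (ln 2).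
  rewrite /Rdiv (ln_mult _ _ p1 (Rinv_0_lt_compat _ p2)) (ln_Rinv _ p2).
  rewrite (ln_mult 2 B ltac:(lra) hB) (ln_mult _ _ e0 l2) ln_exp; ring.
rewrite ln_mult // in h.
have p3 : 0 < x * ln 2 by apply: Rmult_lt_0_compat.
have E2 : ln (x * ln 2 / 2) = ln x + ln (ln 2) - ln 2.
  rewrite /Rdiv (ln_mult _ (/ 2) p3 ltac:(lra)) (ln_mult _ _ hx l2) (ln_Rinv 2 ltac:(lra)); ring.
have H3 := ln_le_sub1 (x * ln 2 / 2) ltac:(apply: Rmult_lt_0_compat; [apply: Rmult_lt_0_compat|]; lra).
rewrite E1.
apply: (Rmult_le_reg_r (ln 2)) => //.
have -> : 3 * ((ln 2 + ln B - 1 - ln (ln 2)) / ln 2) * ln 2 = 3 * (ln 2 + ln B - 1 - ln (ln 2)).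
  field; lra.
have hxl : 0 <= x * ln 2 by apply: Rmult_le_pos; lra.
lra.
Qed.

Lemma final_bound (m d : nat) (B : R) : (0 < m)%nat -> (0 < d)%nat -> 0 < B ->
  pow 2 m <= pow (INR m / INR d * B) d ->
  INR m <= 3 * INR d * (ln (2 * B / (exp 1 * ln 2)) / ln 2).
Proof.
move=> m0 d0 hB h.
have hm : 0 < INR m by apply: lt_0_INR; apply/ltP.
have hd : 0 < INR d by apply: lt_0_INR; apply/ltP.
set x := INR m / INR d.
have hx : 0 < x by apply: Rdiv_lt_0_compat.
have hxB : 0 < x * B by apply: Rmult_lt_0_compat.
have := ln_le' _ _ (pow_lt 2 m ltac:(lra)) h.
rewrite !ln_pow //; last lra.
move=> h2.
have h3 : x * ln 2 <= ln (x * B).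
  apply: (Rmult_le_reg_l (INR d)) => //.
  have -> : INR d * (x * ln 2) = INR m * ln 2 by rewrite /x; field; lra.
  exact: h2.
have := keyG _ _ hx hB h3.
have -> : INR m = INR d * x by rewrite /x; field; lra.
move=> h4.
have -> : 3 * INR d * (ln (2 * B / (exp 1 * ln 2)) / ln 2) = INR d * (3 * (ln (2 * B / (exp 1 * ln 2)) / ln 2)) by ring.
apply: Rmult_le_compat_l; lra.
Qed.

Close Scope R_scope.

Lemma INR_addn a b : INR (a + b)%nat = (INR a + INR b)%R.
Proof. exact: plus_INR. Qed.
Lemma INR_muln a b : INR (a * b)%nat = (INR a * INR b)%R.
Proof. exact: mult_INR. Qed.
Lemma INR_expn a b : INR (expn a b) = (INR a ^ b)%R.
Proof. rewrite -pow_INR; congr INR; elim: b => //= b IH; by rewrite expnS IH. Qed.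

Lemma Phi0 c N : Phi c N 0 = 1%nat.
Proof. by elim: N => //= N ->; rewrite addn0. Qed.

Lemma Phi_crude c N n : (0 < c)%nat -> (Phi c N n <= expn (N.+1 * c) n)%nat.
Proof.
move=> c0; elim: N n => [|N IH] n /=; first by rewrite expn_gt0 mul1n c0.
case: n => [|n]; first by rewrite Phi0 addn0 expn0.
have h1 := IH n.+1; have h2 := IH n.
have h3 : (expn (N.+1 * c) n <= expn (N.+2 * c) n)%nat.
  case: (n) => [|n'] //; by rewrite leq_exp2r // leq_mul2r ltnW ?orbT.
rewrite !expnS in h1 *.
set a := expn (N.+1 * c) n in h1 h2 h3 *; set b := expn (N.+2 * c) n in h3 *.
nia.
Qed.

Open Scope R_scope.

Lemma pow_le1 a n : 0 <= a <= 1 -> a ^ n <= 1.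
Proof. move=> h; rewrite -(pow1 n); apply: pow_incr; lra. Qed.

Lemma exp_pow_n a n : exp a ^ n = exp (INR n * a).
Proof.
elim: n => [|n IH]; first by rewrite /= Rmult_0_l exp_0.
change (exp a ^ n.+1) with (exp a * exp a ^ n).
rewrite IH -exp_plus; congr exp; rewrite S_INR; ring.
Qed.

Lemma Phi_real c N n a : 0 < a <= 1 ->
  INR (Phi c N n) * a ^ n <= (1 + INR c * a) ^ N.
Proof.
move=> ha; have c0 := pos_INR c.
have ca : 0 <= INR c * a by apply: Rmult_le_pos; lra.
elim: N n => [|N IH] n /=.
  have := pow_le1 a n ltac:(lra); simpl; lra.
case: n => [|n].
  rewrite addn0 Phi0 /= Rmult_1_r.
  have := pow_R1_Rle (1 + INR c * a) N ltac:(lra).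
  have := pow_le (1 + INR c * a) N ltac:(lra). nra.
rewrite INR_addn INR_muln.
have h1 := IH n.+1; have h2 := IH n.
have hp := pow_le (1 + INR c * a) N ltac:(lra).
have hP : 0 <= INR (Phi c N n) * a ^ n by apply: Rmult_le_pos; [apply: pos_INR | apply: pow_le; lra].
rewrite /= in h1 *.
nra.
Qed.

Close Scope R_scope.

Set Implicit Arguments.

Lemma cot_prefix (Y : Type) (f : seq Y -> Y) T x : exists s, cot f T x = x ++ s.
Proof.
elim: T x => [|T IH] x; first by exists [::]; rewrite cats0.
have [s E] := IH (cot_step f x); exists (f x :: s).
by rewrite /cot iterSr; rewrite /cot in E; rewrite E /cot_step cat_rcons.
Qed.

Lemma cot_agree (Y : eqType) (f g : seq Y -> Y) T x z :
  (forall j, (j < T)%N -> f (take (size x + j) z) = g (take (size x + j) z)) ->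
  (cot f T x == z) = (cot g T x == z).
Proof.
elim: T x => [|T IH] x H //.
case: (eqVneq x (take (size x) z)) => [xz|xz].
  have fg : f x = g x by have := H 0%N isT; rewrite addn0 -xz.
  rewrite /cot !iterSr /cot_step fg.
  apply: IH => j jT; rewrite size_rcons addSnnS; exact: H.
have nz (h : seq Y -> Y) : (cot h T.+1 x == z) = false.
  apply/negbTE/eqP => E; have [s E'] := cot_prefix h T.+1 x.
  by move: xz; rewrite -E E' take_size_cat // eqxx.
by rewrite !nz.
Qed.

Definition prefs (Y : Type) (T : nat) (z : seq Y) : seq (seq Y) :=
  [seq take (size z - T + j) z | j <- iota 0 T].

Lemma loss_agree (Y : eqType) (f g : seq Y -> Y) T z :
  (T <= size z)%N -> (forall q, q \in prefs T z -> f q = g q) ->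
  cot_loss f T z = cot_loss g T z.
Proof.
move=> Tz H; rewrite /cot_loss !(eq_sym z) (@cot_agree _ f g) //.
move=> j jT; rewrite size_takel ?leq_subr //; apply: H.
by apply/mapP; exists j => //; rewrite mem_iota.
Qed.

Lemma setup (Y : finType) (F : (seq Y -> Y) -> Prop) T (P : seq (seq Y)) :
  uniq P -> all (fun z => (T <= size z)%N) P -> vc_shatters (loss_class F T) P ->
  exists (y0 : Y) (Q : seq (seq Y)) (H : {set {ffun 'I_(size Q) -> Y}}),
    [/\ uniq Q, (size Q <= size P * T)%N, #|H| = expn 2 (size P) &
    forall h, h \in H -> exists f, F f /\ forall i : 'I_(size Q), h i = f (nth [::] Q i)].
Proof.
move=> uP aP shP.
set m := size P.
pose lab (t : m.-tuple bool) (z : seq Y) := nth false t (index z P).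
have ex t : exists f, F f /\ forall z, z \in P -> cot_loss f T z = lab t z.
  have [h [[f [Ff ->]] hP]] := shP (lab t); by exists f.
pose g t := proj1_sig (constructive_indefinite_description _ (ex t)).
have gP t : F (g t) /\ forall z, z \in P -> cot_loss (g t) T z = lab t z.
  exact: proj2_sig (constructive_indefinite_description _ (ex t)).
pose y0 : Y := g (nseq_tuple m false) [::].
set Q := undup (flatten [seq prefs T z | z <- P]).
pose beh t : {ffun 'I_(size Q) -> Y} := [ffun i : 'I_(size Q) => g t (nth [::] Q i)].
exists y0, Q, (beh @: setT); split.
- exact: undup_uniq.
- apply: leq_trans (size_undup _) _; rewrite size_flatten /shape -map_comp.
  rewrite /m; elim: (P) => //= z s IH; by rewrite /prefs size_map size_iota mulSn leq_add2l.
- rewrite card_in_imset ?cardsT ?card_tuple ?card_bool //.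
  move=> t1 t2 _ _ E.
  have agQ q : q \in Q -> g t1 q = g t2 q.
    move=> qQ; have iq : (index q Q < size Q)%N by rewrite index_mem.
    have := congr1 (fun h : {ffun 'I_(size Q) -> Y} => h (Ordinal iq)) E.
    by rewrite !ffunE /= nth_index.
  have labE z : z \in P -> lab t1 z = lab t2 z.
    move=> zP; rewrite -(gP t1).2 // -(gP t2).2 //.
    apply: loss_agree; first exact: (allP aP).
    move=> q qz; apply: agQ; rewrite mem_undup; apply/flattenP.
    by exists (prefs T z) => //; apply/mapP; exists z.
  apply: val_inj; apply: (@eq_from_nth _ false); first by rewrite !size_tuple.
  move=> i; rewrite size_tuple => im.
  have := labE (nth [::] P i) (mem_nth _ im).
  by rewrite /lab index_uniq.
- move=> h /imsetP [t _ ->]; exists (g t); split; first exact: (gP t).1.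
  by move=> i; rewrite ffunE.
Qed.


Lemma shat_trans (Y : finType) (F : (seq Y -> Y) -> Prop) (Q : seq (seq Y))
  (H : {set {ffun 'I_(size Q) -> Y}}) (S : {set 'I_(size Q)}) :
  uniq Q -> (forall h, h \in H -> exists f, F f /\ forall i : 'I_(size Q), h i = f (nth [::] Q i)) ->
  shat H S ->
  [/\ uniq (map (fun i : 'I_(size Q) => nth [::] Q i) (enum S)),
      size (map (fun i : 'I_(size Q) => nth [::] Q i) (enum S)) = #|S| &
      exists (h0 h1 : 'I_(size Q) -> Y) (fU : {set 'I_(size Q)} -> seq Y -> Y),
      (forall i, i \in S -> h0 i != h1 i) /\
      forall U : {set 'I_(size Q)}, F (fU U) /\ forall i, i \in S -> fU U (nth [::] Q i) = if i \in U then h0 i else h1 i].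
Proof.
move=> uQ HF [h0 [h1 [neq sh]]]; split.
- rewrite map_inj_in_uniq ?enum_uniq // => i j _ _ /eqP.
  by rewrite nth_uniq // => /eqP /val_inj.
- by rewrite size_map cardE.
exists h0, h1.
have ex (U : {set 'I_(size Q)}) : exists f, F f /\ forall i, i \in S -> f (nth [::] Q i) = if i \in U then h0 i else h1 i.
  have [g gH gP] := sh U; have [f [Ff fE]] := HF g gH.
  by exists f; split => // i iS; rewrite -fE gP.
exists (fun U => proj1_sig (constructive_indefinite_description _ (ex U))).
split => // U; exact: proj2_sig (constructive_indefinite_description _ (ex U)).
Qed.

Lemma to_nat (Y : finType) (F : (seq Y -> Y) -> Prop) (Q : seq (seq Y)) (y0 : Y)
  (S : {set 'I_(size Q)}) (h0 h1 : 'I_(size Q) -> Y) (fU : {set 'I_(size Q)} -> seq Y -> Y) :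
  uniq Q -> (forall i, i \in S -> h0 i != h1 i) ->
  (forall U : {set 'I_(size Q)}, F (fU U) /\ forall i, i \in S -> fU U (nth [::] Q i) = if i \in U then h0 i else h1 i) ->
  nat_shatters F (map (fun i : 'I_(size Q) => nth [::] Q i) (enum S)).
Proof.
move=> uQ neq sh.
have idx (i : 'I_(size Q)) : insub (index (nth [::] Q i) Q) = Some i.
  by rewrite index_uniq // valK.
exists (fun q => oapp h0 y0 (insub (index q Q))), (fun q => oapp h1 y0 (insub (index q Q))).
split.
  move=> x /mapP [i]; rewrite mem_enum => iS ->; rewrite idx /=; exact: neq.
move=> U; exists (fU [set i : 'I_(size Q) | U (nth [::] Q i)]); split; first exact: (sh _).1.
move=> x /mapP [i]; rewrite mem_enum => iS ->; rewrite idx /= (sh _).2 // inE.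
by case: (U _).
Qed.

Lemma to_vc (F : (seq bool -> bool) -> Prop) (Q : seq (seq bool))
  (S : {set 'I_(size Q)}) (h0 h1 : 'I_(size Q) -> bool) (fU : {set 'I_(size Q)} -> seq bool -> bool) :
  (forall i, i \in S -> h0 i != h1 i) ->
  (forall U : {set 'I_(size Q)}, F (fU U) /\ forall i, i \in S -> fU U (nth [::] Q i) = if i \in U then h0 i else h1 i) ->
  vc_shatters F (map (fun i : 'I_(size Q) => nth [::] Q i) (enum S)).
Proof.
move=> neq sh lab.
exists (fU [set i : 'I_(size Q) | h0 i == lab (nth [::] Q i)]); split; first exact: (sh _).1.
move=> x /mapP [i]; rewrite mem_enum => iS ->; rewrite (sh _).2 // inE.
have := neq i iS.
by case: (h0 i); case: (h1 i); case: (lab _).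
Qed.

Unset Implicit Arguments.

Lemma le_div_r (a b c : R) : (0 < b)%R -> (a * b <= c)%R -> (a <= c / b)%R.
Proof.
move=> hb h; have hb' : (0 < / b)%R by apply: Rinv_0_lt_compat.
have := Rmult_le_compat_r (/ b) _ _ (Rlt_le _ _ hb') h.
have -> : (a * b * / b = a)%R by field; lra.
done.
Qed.

Lemma log2_ge1 z : (2 <= z)%R -> (1 <= log2 z)%R.
Proof.
move=> hz; rewrite /log2; apply: le_div_r; first exact: ln2_pos.
rewrite Rmult_1_l; apply: ln_le' => //; lra.
Qed.

Lemma INR2 : INR 2 = 2%R. Proof. simpl; ring. Qed.

Lemma pow2_le1 m : (expn 2 m <= Phi 0 0 0)%N -> m = 0%N.
Proof.
case: m => // m /=; rewrite expnS => h; have := expn_gt0 2 m; lia.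
Qed.

Unset Implicit Arguments.

Theorem theoremB5 (T : nat) (hT : (0 < T)%N) :
  (forall (F : (seq bool -> bool) -> Prop) (d : nat),
     is_VCdim F d ->
     forall P : seq (seq bool),
       uniq P -> all (fun z => (T <= size z)%N) P ->
       vc_shatters (loss_class F T) P ->
       (INR (size P) <= 3 * INR d * log2 (2 * INR T / ln 2))%R)
  /\
  (forall (Sigma : finType), #|Sigma| <> 2 ->
   forall (F : (seq Sigma -> Sigma) -> Prop) (n : nat),
     is_Ndim F n ->
     forall P : seq (seq Sigma),
       uniq P -> all (fun z => (T <= size z)%N) P ->
       vc_shatters (loss_class F T) P ->
       (INR (size P) <= 3 * INR n *
          log2 (2 * INR n * INR #|Sigma| ^ 2 * INR T / (exp 1 * ln 2)))%R).
Proof.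
have l2 := ln2_pos; have l21 := ln2_lt1; have e0 := exp_pos 1; have e3 := exp_le_3.
have hT1 : (1 <= INR T)%R by have := le_INR 1 T ltac:(apply/leP; exact: hT); simpl.
split.
- move=> F d hd P uP aP shP.
  have [y0 [Q [H [uQ sQ cH HF]]]] := setup uP aP shP.
  set m := size P in sQ cH *.
  have dim : forall S : {set 'I_(size Q)}, S \subset setT -> shat H S -> (#|S| <= d)%N.
    move=> S _ sh; have [u sz [h0 [h1 [fU [neq fP]]]]] := shat_trans uQ HF sh.
    rewrite -sz; apply: hd.2 => //; exact: to_vc neq fP.
  have supp : forall h, h \in H -> forall i, i \notin [set: 'I_(size Q)] -> h i = y0.
    by move=> h _ i; rewrite inE.
  have cb := @core _ _ y0 (size Q) setT H d (etrans (cardsT _) (card_ord _)) supp dim.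
  rewrite cH card_bool in cb.
  have L : (1 <= log2 (2 * INR T / ln 2))%R.
    apply: log2_ge1; apply: le_div_r => //; nra.
  have hd0 := pos_INR d.
  case: (posnP m) => [->|m0]; first by simpl; nra.
  case: (leqP m d) => [md|dm].
    have := le_INR _ _ (elimT leP md); nra.
  case: (posnP d) => [d0|d0].
    by move: cb; rewrite d0 Phi0 => /(@pow2_le1 m) mz; move: m0; rewrite mz.
  have dmT : (d <= m * T)%N by apply: leq_trans (ltnW dm) _; rewrite leq_pmulr.
  have hm : (0 < INR m)%R by apply: lt_0_INR; apply/ltP.
  have hdR : (0 < INR d)%R by apply: lt_0_INR; apply/ltP.
  have hmT : (0 < INR (m * T))%R by apply: lt_0_INR; apply/ltP; rewrite muln_gt0 m0.
  set a := (INR d / INR (m * T))%R.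
  have ha : (0 < a <= 1)%R.
    split; first by apply: Rdiv_lt_0_compat.
    apply: (Rmult_le_reg_r (INR (m * T))) => //.
    have -> : (a * INR (m * T) = INR d)%R by rewrite /a; field; lra.
    have := le_INR _ _ (elimT leP dmT); lra.
  have PR := Phi_real 1 (size Q) d a ha.
  have cb1 : (expn 2 m <= Phi 1 (size Q) d)%N := cb.
  have s1 : ((1 + INR 1 * a) ^ size Q <= (1 + a) ^ (m * T))%R.
    rewrite Rmult_1_l; apply: Rle_pow; [lra | exact/leP].
  have s2 : ((1 + a) ^ (m * T) <= exp a ^ (m * T))%R.
    apply: pow_incr; have := exp_ineq1_le a; lra.
  have s3 : (exp a ^ (m * T) = exp 1 ^ d)%R.
    rewrite !exp_pow_n; congr exp; rewrite /a; field; lra.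
  set X := (INR m / INR d * (exp 1 * INR T))%R.
  have Xa : (X * a = exp 1)%R.
    rewrite /X /a INR_muln; field; split; lra.
  have had : (0 < a ^ d)%R by apply: pow_lt; lra.
  have s4 : (INR (Phi 1 (size Q) d) <= X ^ d)%R.
    apply: (Rmult_le_reg_r (a ^ d)) => //.
    rewrite -Rpow_mult_distr Xa; lra.
  have s5 : (2 ^ m <= X ^ d)%R.
    have := le_INR _ _ (elimT leP cb1); rewrite INR_expn INR2; lra.
  have := @final_bound m d _ m0 d0 (Rmult_lt_0_compat (exp 1) (INR T) e0 ltac:(lra)) s5.
  have -> : (2 * (exp 1 * INR T) / (exp 1 * ln 2) = 2 * INR T / ln 2)%R by field; lra.
  by rewrite /log2.
- move=> Sigma k2 F n hn P uP aP shP.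
  have [y0 [Q [H [uQ sQ cH HF]]]] := setup uP aP shP.
  set m := size P in sQ cH *.
  set k := #|Sigma| in k2 *.
  have dim : forall S : {set 'I_(size Q)}, S \subset setT -> shat H S -> (#|S| <= n)%N.
    move=> S _ sh; have [u sz [h0 [h1 [fU [neq fP]]]]] := shat_trans uQ HF sh.
    rewrite -sz; apply: hn.2 => //.
    exact: (@to_nat Sigma F Q y0 S h0 h1 fU uQ neq fP).
  have supp : forall h, h \in H -> forall i, i \notin [set: 'I_(size Q)] -> h i = y0.
    by move=> h _ i; rewrite inE.
  have cb := @core _ _ y0 (size Q) setT H n (etrans (cardsT _) (card_ord _)) supp dim.
  rewrite cH in cb.
  case: (posnP n) => [n0|n0].
    move: cb; rewrite n0 Phi0 => /(@pow2_le1 m) ->; simpl; lra.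
  have k3 : (3 <= k)%N.
    have [P' [_ [sP' [h0 [h1 [neq _]]]]]] := hn.1.
    have xP : nth [::] P' 0 \in P' by apply: mem_nth; rewrite sP'.
    have := max_card [set h0 (nth [::] P' 0); h1 (nth [::] P' 0)].
    rewrite cards2 neq //= => h2.
    have : (1 < k)%N by exact: h2.
    move: k2; clearbody k; lia.
  have kR : (3 <= INR k)%R by have := le_INR _ _ (elimT leP k3); simpl; lra.
  have nR : (1 <= INR n)%R by have := le_INR _ _ (elimT leP n0); simpl; lra.
  have hnR : (0 < INR n)%R by lra.
  set B := (INR n * INR k ^ 2 * INR T)%R.
  have hB : (0 < B)%R by rewrite /B; apply: Rmult_lt_0_compat; [apply: Rmult_lt_0_compat|]; nra.
  have EB : (2 * INR n * INR k ^ 2 * INR T / (exp 1 * ln 2) = 2 * B / (exp 1 * ln 2))%R.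
    by rewrite /B; field; lra.
  rewrite EB.
  case: (posnP m) => [->|m0].
    have L : (1 <= log2 (2 * B / (exp 1 * ln 2)))%R.
      apply: log2_ge1; apply: le_div_r; first by apply: Rmult_lt_0_compat.
      have k9 : (9 <= INR k ^ 2)%R by simpl; nra.
      have el : (exp 1 * ln 2 <= 3)%R by nra.
      have nk : (9 <= INR n * INR k ^ 2)%R by nra.
      have nkT : (9 <= INR n * INR k ^ 2 * INR T)%R by nra.
      rewrite /B; lra.
    simpl; nra.
  set c := 'C(k, 2) in cb.
  have c2 : (2 * c <= k * k)%N.
    have e := odd_double_half (k * k.-1); rewrite -bin2 -mul2n in e.
    rewrite /c; nia.
  have c0 : (0 < c)%N by rewrite /c bin_gt0; lia.
  have cr := @Phi_crude c (size Q) n c0.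
  have mT : (1 <= m * T)%N by rewrite muln_gt0 m0.
  have sc : ((size Q).+1 * c <= m * T * (k * k))%N by nia.
  have cr2 : (expn ((size Q).+1 * c) n <= expn (m * T * (k * k)) n)%N.
    by rewrite leq_exp2r.
  have tot := leq_trans cb (leq_trans cr cr2).
  have s5 : (2 ^ m <= (INR m / INR n * B) ^ n)%R.
    have := le_INR _ _ (elimT leP tot); rewrite !INR_expn INR2 !INR_muln.
    have -> : (INR m / INR n * B = INR m * INR T * (INR k * INR k))%R by rewrite /B; field; lra.
    done.
  have := @final_bound m n B m0 n0 hB s5.
  by rewrite /log2.
Qed.
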